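(* Let $m,n,a$ be nonnegative integers with $1\le m\le n+1$ and $n\le a$. Then $$\sum_{k=0}^{m-1}\binom{m}{k}^{-1}\binom{a}{n-k}^{-1}=g(m)\sum_{i=0}^{m-1}\frac{C(i)}{g(i)\,(i+2)\,(a+i-n+2)},$$ where $$g(m)=\frac{(a+m-n+1)!\,(a+4)!\,(m+1)}{2\,(a+m+3)!\,(a-n+2)!}$$ (and $g(i)$ is the same expression with $m$ replaced by $i$), and $$C(i)=(n+i+in+1)\binom{a}{n}^{-1}+(2i+a-n+3)\binom{a}{n-i}^{-1}.$$ *)

(* Defs.v *)
From mathcomp Require Import all_boot all_algebra.
Set Implicit Arguments. Unset Strict Implicit. Unset Printing Implicit Defensive.
Import GRing.Theory Num.Theory.
Local Open Scope ring_scope.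

(* Working over the rationals. All subtractions below are on nat and are
   never truncated under the hypotheses n <= a, i <= m-1 <= n. *)

Definition g (n a m : nat) : rat :=
  (((a + m - n + 1)`!)%:R * ((a + 4)`!)%:R * (m + 1)%:R) /
  (2%:R * ((a + m + 3)`!)%:R * ((a - n + 2)`!)%:R).

Definition Cf (n a i : nat) : rat :=
  (n + i + i * n + 1)%:R / ('C(a, n))%:R
  + (2 * i + a - n + 3)%:R / ('C(a, n - i))%:R.

(* Main.v *)
Require Import Defs.
From mathcomp Require Import all_boot all_algebra.
From mathcomp Require Import ring lra zify.
Import GRing.Theory Num.Theory.
Local Open Scope ring_scope.

Section S.
Variables n d : nat.

Definition B (x y : nat) : rat := ('C(x, y))%:R.
Definition t (m k : nat) : rat := (B m k)^-1 * (B (n + d) (n - k))^-1.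

Lemma B_neq0 x y : (y <= x)%N -> B x y != 0.
Proof. by move=> h; rewrite /B pnatr_eq0 -lt0n bin_gt0. Qed.

Lemma tS m k : (k <= m)%N -> t m.+1 k * (m.+1)%:R = t m k * (m%:R + 1 - k%:R).
Proof.
move=> hk.
have E : (m.+1 * 'C(m, k) = (m.+1 - k) * 'C(m.+1, k))%N by rewrite -mul_bin_down.
have E' : (m.+1)%:R * B m k = (m.+1 - k)%:R * B m.+1 k :> rat.
  by rewrite /B -!natrM E.
have h1 : B m k != 0 by apply: B_neq0. have h2 : B m.+1 k != 0 by apply: B_neq0; lia.
have h3 : B (n + d) (n - k) != 0 by apply: B_neq0; lia.
have -> : (m.+1)%:R = (m.+1 - k)%:R * B m.+1 k / B m k :> rat by rewrite -E' mulfK.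
rewrite natrB; last by lia.
rewrite /t -natr1. field. by rewrite h1 h2 h3.
Qed.

Lemma tk m k : (k < m)%N -> (k < n)%N ->
  t m k.+1 * (m%:R - k%:R) * (n%:R - k%:R) = t m k * (k%:R + 1) * (d%:R + k%:R + 1).
Proof.
move=> hm hn.
have E1 : (k.+1%:R * B m k.+1 = (m - k)%:R * B m k :> rat).
  by rewrite /B -!natrM mul_bin_left.
set j := (n - k.+1)%N.
have hj : (n - k = j.+1)%N by rewrite /j; lia.
have E2 : (j.+1%:R * B (n + d) j.+1 = (d + k + 1)%:R * B (n + d) j :> rat).
  rewrite /B -!natrM mul_bin_left; congr (_ * _)%:R; rewrite /j; lia.
have h1 : B m k != 0 by apply: B_neq0; lia.
have h2 : B m k.+1 != 0 by apply: B_neq0; lia.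
have h3 : B (n + d) j != 0 by apply: B_neq0; rewrite /j; lia.
have h4 : B (n + d) j.+1 != 0 by apply: B_neq0; rewrite /j; lia.
have e1 : m%:R - k%:R = k.+1%:R * B m k.+1 / B m k :> rat.
  by rewrite -natrB ?E1 ?mulfK //; lia.
have e2 : d%:R + k%:R + 1 = j.+1%:R * B (n + d) j.+1 / B (n + d) j :> rat.
  by rewrite E2 mulfK // !natrD.
have e3 : n%:R - k%:R = j.+1%:R :> rat by rewrite -hj natrB //; lia.
rewrite e1 e2 e3 /t hj /j -!natr1. field. by rewrite h1 h2 h3 h4.
Qed.

Definition P (m k : nat) : rat :=
  (n + d + m + 4)%:R * (m%:R + 1 - k%:R) - (d + m + 2)%:R * (m + 2)%:R.

Lemma tele m j : (j <= m)%N -> (m <= n)%N ->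
  \sum_(0 <= k < j) t m k * P m k =
  t m 0 * (m%:R + 1) * (n%:R + 1) - t m j * (m%:R - j%:R + 1) * (n%:R - j%:R + 1).
Proof.
move=> + hmn; elim: j => [_|j IH hj].
  by rewrite big_geq //; ring.
rewrite big_nat_recr //= IH; last by lia.
have := @tk m j hj (leq_trans hj hmn).
rewrite -natr1 /P !natrD => H.
have -> : t m j.+1 * (m%:R - (j%:R + 1) + 1) * (n%:R - (j%:R + 1) + 1)
   = t m j.+1 * (m%:R - j%:R) * (n%:R - j%:R) by ring.
rewrite H. ring.
Qed.

Definition S (m : nat) : rat := \sum_(0 <= k < m) t m k.

Lemma recur m : (m <= n)%N ->
  (n + d + m + 4)%:R * (m + 1)%:R * S m.+1 =
  (d + m + 2)%:R * (m + 2)%:R * S m + Cf n (n + d) m.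
Proof.
move=> hmn.
have H1 : \sum_(0 <= k < m) t m.+1 k * (m.+1)%:R
   = \sum_(0 <= k < m) t m k * (m%:R + 1 - k%:R).
  by apply: eq_big_nat => k /andP[_ hk]; rewrite tS //; lia.
have Hl : (n + d + m + 4)%:R * (m + 1)%:R * S m.+1 =
   \sum_(0 <= k < m) t m k * ((n + d + m + 4)%:R * (m%:R + 1 - k%:R))
   + (n + d + m + 4)%:R * (t m.+1 m * (m.+1)%:R).
  rewrite /S big_nat_recr //= mulrDr; congr (_ + _); last by rewrite addn1; ring.
  idtac.
  rewrite addn1 -mulrA [X in _ * X]mulrC big_distrl /= H1 big_distrr /=.
  by apply: eq_bigr => k _; ring.
have Hr : (d + m + 2)%:R * (m + 2)%:R * S m =
   \sum_(0 <= k < m) t m k * ((d + m + 2)%:R * (m + 2)%:R).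
  by rewrite /S big_distrr /=; apply: eq_bigr => k _; ring.
have HP : \sum_(0 <= k < m) t m k * P m k =
   \sum_(0 <= k < m) t m k * ((n + d + m + 4)%:R * (m%:R + 1 - k%:R))
   - \sum_(0 <= k < m) t m k * ((d + m + 2)%:R * (m + 2)%:R).
  by rewrite -sumrB; apply: eq_bigr => k _; rewrite /P; ring.
have HT := @tele m m (leqnn m) hmn.
rewrite HP in HT.
have e : t m.+1 m * (m.+1)%:R = t m m.
  by rewrite tS //; ring.
rewrite Hl Hr e.
have -> : \sum_(0 <= k < m) t m k * ((n + d + m + 4)%:R * (m%:R + 1 - k%:R)) =
  \sum_(0 <= k < m) t m k * ((d + m + 2)%:R * (m + 2)%:R) +
  (t m 0 * (m%:R + 1) * (n%:R + 1) - t m m * (m%:R - m%:R + 1) * (n%:R - m%:R + 1)).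
  by rewrite -HT; ring.
rewrite /Cf /t /B bin0 binn subn0.
have -> : (2 * m + (n + d) - n + 3 = 2 * m + d + 3)%N by lia.
rewrite !natrD !natrM. field.
by rewrite !pnatr_eq0 -!lt0n !bin_gt0; apply/andP; split; lia.
Qed.
End S.

Lemma g_neq0 n d m : g n (n + d) m != 0.
Proof.
rewrite /g; apply: mulf_neq0; last apply: invr_neq0; rewrite ?mulf_neq0 //
  ?pnatr_eq0 -?lt0n ?fact_gt0 //; lia.
Qed.

Lemma gratio n d m : g n (n + d) m.+1 * ((n + d + m + 4)%:R * (m + 1)%:R)
   = g n (n + d) m * ((d + m + 2)%:R * (m + 2)%:R).
Proof.
rewrite /g.
have -> : (n + d + m.+1 - n + 1 = (d + m + 1).+1)%N by lia.
have -> : (n + d + m - n + 1 = d + m + 1)%N by lia.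
have -> : (n + d + m.+1 + 3 = (n + d + m + 3).+1)%N by lia.
rewrite (factS (d + m + 1)) (factS (n + d + m + 3)).
have h1 : ((n + d + m + 3)`!)%:R != 0 :> rat by rewrite pnatr_eq0 -lt0n fact_gt0.
have h2 : ((n + d - n + 2)`!)%:R != 0 :> rat by rewrite pnatr_eq0 -lt0n fact_gt0.
move: h1 h2.
set F1 := (n + d + m + 3)`!. set F2 := (n + d - n + 2)`!.
set F3 := (d + m + 1)`!. set F4 := (n + d + 4)`!.
move=> h1 h2.
rewrite !(natrM _ (_.+1)).
have -> : (n + d + m + 3).+1%:R = (n + d + m + 4)%:R :> rat by congr (_%:R); lia.
have -> : (d + m + 1).+1%:R = (d + m + 2)%:R :> rat by congr (_%:R); lia.
have -> : (m.+1 + 1)%:R = (m + 2)%:R :> rat by congr (_%:R); lia.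
have h5 : (n + d + m + 4)%:R != 0 :> rat by rewrite pnatr_eq0; lia.
rewrite ?natrM.
field.
by rewrite h1 h2 -!natrD h5.
Qed.

Lemma mainS n d m : (m <= n + 1)%N ->
  S n d m = g n (n + d) m * \sum_(0 <= i < m)
      Cf n (n + d) i / (g n (n + d) i * (i + 2)%:R * (n + d + i - n + 2)%:R).
Proof.
elim: m => [_|m IH hm]; first by rewrite /S !big_geq // mulr0.
have hmn : (m <= n)%N by lia.
have R := @recur n d m hmn.
have G := gratio n d m.
rewrite big_nat_recr //=.
have -> : (n + d + m - n + 2 = d + m + 2)%N by lia.
have gn := g_neq0 n d m.
have h1 : (n + d + m + 4)%:R * (m + 1)%:R != 0 :> rat.
  by rewrite mulf_neq0 // pnatr_eq0; lia.
have h2 : (d + m + 2)%:R * (m + 2)%:R != 0 :> rat.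
  by rewrite mulf_neq0 // pnatr_eq0; lia.
have -> : S n d m.+1 = ((d + m + 2)%:R * (m + 2)%:R * S n d m + Cf n (n + d) m)
   / ((n + d + m + 4)%:R * (m + 1)%:R) by rewrite -R mulrC mulKf.
have -> : g n (n + d) m.+1 = g n (n + d) m * ((d + m + 2)%:R * (m + 2)%:R)
   / ((n + d + m + 4)%:R * (m + 1)%:R) by rewrite -G mulfK.
rewrite IH; last by lia.
move: h1 h2 gn.
set A := (n + d + m + 4)%:R * (m + 1)%:R.
set Bb := (d + m + 2)%:R.
set Cc := (m + 2)%:R.
move=> h1 h2 gn.
field.
rewrite gn h1 !andbT; apply/andP; split; apply/negP => /eqP H; have := ler0n rat d; have := ler0n rat m; lra.
Qed.

Theorem theorem3 (m n a : nat) (hm1 : (1 <= m)%N) (hm2 : (m <= n + 1)%N)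
  (hna : (n <= a)%N) :
  \sum_(0 <= k < m) (('C(m, k))%:R : rat)^-1 * (('C(a, n - k))%:R)^-1
  = g n a m * \sum_(0 <= i < m)
      Cf n a i / (g n a i * (i + 2)%:R * (a + i - n + 2)%:R).
Proof.
have [d ->] : exists d, a = (n + d)%N by exists (a - n)%N; lia.
exact: (@mainS n d m hm2).
Qed.
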